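(* Let $A$ be a countable non-empty set of players, $\mathbf{n}\notin A$ an additional ''nature'' position owner, $C$ a finite non-empty set of choices, $d:C^*\to A\cup\{\mathbf{n}\}$, $P$ a function assigning to every $w\in d^{-1}(\{\mathbf{n}\})$ a probability distribution $P(w)$ on $C$, and for every $a\in A$ let $f_a:C^\omega\to[0,1]$ be continuous (product of discrete topologies on $C^\omega$). Then the stochastic infinite sequential game $\langle A,C,d,(f_a)_{a\in A},P\rangle$ has a subgame perfect equilibrium.
   Context: A strategy of player $a\in A$ is a function $s_a:d^{-1}(\{a\})\to C$; a strategy profile is a family of strategies, one per player. Given a profile $\sigma$ and a history $\gamma\in C^*$, the induced probability distribution on plays in $\gamma C^\omega$ is obtained by following $\gamma$, then at each history $w$ with $d(w)=a\in A$ choosing $\sigma_a(w)$, and at each history $w$ with $d(w)=\mathbf{n}$ choosing the next element at random according to $P(w)$ (independently). The payoff of player $a$ from $\gamma$ under $\sigma$ is the expected value of $f_a$ under this distribution. A profile $\sigma$ is a subgame perfect equilibrium if for no $\gamma\in C^*$, player $a$ and strategy $s_a$ of $a$ does replacing $\sigma_a$ by $s_a$ strictly increase the expected payoff of $a$ from $\gamma$. *)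

(* Defs.v *)
From HB Require Import structures.
From mathcomp Require Import all_boot all_order all_algebra.
From mathcomp Require Import all_classical all_reals all_analysis.
Set Implicit Arguments. Unset Strict Implicit. Unset Printing Implicit Defensive.
Import Order.TTheory GRing.Theory Num.Theory numFieldNormedType.Exports.
Local Open Scope ring_scope.

Section Game.
Variables (R : realType) (A : countType) (C : finType).

(* Owners of positions: [Some a] is player a, [None] is nature n. *)
Definition owner := option A.

Definition play := nat -> C.

(* Continuity of f : C^omega -> R for the product of discrete topologies:
   at each play p, for every eps > 0 there is a cylinder (common prefix of
   length n) on which f stays eps-close to f p. *)
Definition cont_play (f : play -> R) : Prop :=
  forall (p : play) (eps : R), 0 < eps ->
    exists n : nat, forall q : play, (forall i, (i < n)%N -> q i = p i) ->
      `|f q - f p| < eps.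

(* A strategy of a player is a function from histories to choices; only its
   values on d^-1({a}) matter. A profile gives one strategy per player. *)
Definition strategy := seq C -> C.
Definition profile := A -> strategy.

Definition upd (sigma : profile) (a : A) (s : strategy) : profile :=
  fun b => if b == a then s else sigma b.

Variables (d : seq C -> owner) (P : seq C -> {ffun C -> R}).

Definition trans (sigma : profile) (w : seq C) (c : C) : R :=
  match d w with
  | Some a => if sigma a w == c then 1 else 0
  | None => P w c
  end.

Definition cyl_prob (sigma : profile) (gamma : seq C) (n : nat)
    (u : n.-tuple C) : R :=
  \prod_(i < n) trans sigma (gamma ++ take i u) (tnth u i).

Definition complete (c0 : C) (w : seq C) : play := fun i => nth c0 w i.

Definition approx_payoff (c0 : C) (f : play -> R) (sigma : profile)
    (gamma : seq C) (n : nat) : R :=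
  \sum_(u : n.-tuple C) cyl_prob sigma gamma u * f (complete c0 (gamma ++ u)).

(* Expected value of a continuous f : C^omega -> R under the distribution
   induced by sigma from gamma: the limit of the cylinder approximations
   (which is the integral of f for the induced measure, f being continuous). *)
Definition exp_payoff (c0 : C) (f : play -> R) (sigma : profile)
    (gamma : seq C) : R :=
  limn (approx_payoff c0 f sigma gamma).

Definition is_SPE (c0 : C) (f : A -> play -> R) (sigma : profile) : Prop :=
  forall (gamma : seq C) (a : A) (s : strategy),
    ~ (exp_payoff c0 (f a) sigma gamma < exp_payoff c0 (f a) (upd sigma a s) gamma).

End Game.

(* Main.v *)
Require Import Defs.
From HB Require Import structures.
From mathcomp Require Import all_boot all_order all_algebra.
From mathcomp Require Import all_classical all_reals all_analysis.
From mathcomp Require Import lra.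
Import Order.TTheory GRing.Theory Num.Theory numFieldNormedType.Exports.
Set Implicit Arguments. Unset Strict Implicit. Unset Printing Implicit Defensive.
Local Open Scope classical_set_scope.
Local Open Scope ring_scope.
Definition infinite (S : nat -> Prop) := forall M, exists n, (M <= n)%N /\ S n.

Lemma nearN (P : nat -> Prop) N : (forall n, (N <= n)%N -> P n) -> \forall n \near \oo, P n.
Proof. by move=> H; exists N. Qed.

Section Cluster.
Variables (X : countType) (C : finType) (c0 : C) (g : nat -> X -> C).

Lemma pigeon (S : nat -> Prop) (x : X) : infinite S ->
  exists c, infinite (fun n => S n /\ g n x = c).
Proof.
move=> HS; apply: contrapT => /forallNP Hc.
have Hb : forall c, exists M, forall n, (M <= n)%N -> ~ (S n /\ g n x = c).
  move=> c; have := Hc c; move=> /existsNP [M HM]; exists M => n Mn Sn.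
  by apply: HM; exists n.
pose Mf c := xget 0%N (fun M => forall n, (M <= n)%N -> ~ (S n /\ g n x = c)).
have HMf c : forall n, (Mf c <= n)%N -> ~ (S n /\ g n x = c).
  rewrite /Mf; case: (Hb c) => M HM.
  exact: (xgetPex 0%N (P := fun M => forall n, (M <= n)%N -> ~ (S n /\ g n x = c)) (ex_intro _ M HM)).
have [n [Mn Sn]] := HS (\max_c Mf c).
apply: (HMf (g n x) n) => //.
by apply: leq_trans Mn; apply: (leq_bigmax_cond (g n x)).
Qed.

Definition step (S : nat -> Prop) (k : nat) : C * (nat -> Prop) :=
  match unpickle k with
  | None => (c0, S)
  | Some x => let c := xget c0 (fun c => infinite (fun n => S n /\ g n x = c)) in
     (c, fun n => S n /\ g n x = c)
  end.

Fixpoint Sk (k : nat) : nat -> Prop :=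
  match k with 0 => fun _ => True | k.+1 => (step (Sk k) k).2 end.

Definition hlim (x : X) : C := (step (Sk (pickle x)) (pickle x)).1.

Lemma Sk_inf k : infinite (Sk k).
Proof.
elim: k => [|k IH] /=; first by move=> M; exists M.
rewrite /step; case: (unpickle k) => [x|] //=.
apply: (xgetPex c0 (P := fun c => infinite (fun n => Sk k n /\ g n x = c))).
exact: pigeon.
Qed.

Lemma Sk_dec k n : Sk k.+1 n -> Sk k n.
Proof. by rewrite /= /step; case: (unpickle k) => [x|] //= []. Qed.

Lemma Sk_mono j k n : (j <= k)%N -> Sk k n -> Sk j n.
Proof.
move=> /subnK <-; elim: (k - j)%N => [|i IH] //= H.
by apply: IH; apply: Sk_dec.
Qed.

Lemma Sk_val x n : Sk (pickle x).+1 n -> g n x = hlim x.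
Proof. by rewrite /= /hlim /step pickleK /= => -[]. Qed.

End Cluster.

Lemma cluster (X : countType) (C : finType) (c0 : C) (g : nat -> X -> C) :
  exists h : X -> C, forall (F : seq X) M, exists n, (M <= n)%N /\
     forall x, x \in F -> g n x = h x.
Proof.
exists (@hlim X C c0 g) => F M.
pose K := (\max_(x <- F) (pickle x).+1)%N.
have [n [Mn Sn]] := @Sk_inf X C c0 g K M.
exists n; split => // x xF; apply: Sk_val; apply: Sk_mono Sn.
by rewrite /K (big_rem x xF) /= leq_maxl.
Qed.
Section Game.
Variables (R : realType) (A : countType) (C : finType) (c0 : C).
Variables (d : seq C -> option A) (P : seq C -> {ffun C -> R}).
Variable (f : (nat -> C) -> R).

Notation approx := (approx_payoff d P c0 f).
Notation tr := (trans d P).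

Lemma approx0 sigma gamma : approx sigma gamma 0 = f (complete c0 gamma).
Proof.
rewrite /approx_payoff (big_pred1 [tuple]) /=; last by move=> u; apply/esym/eqP; exact: tuple0.
by rewrite /cyl_prob big_ord0 mul1r cats0.
Qed.

Lemma approxS sigma gamma m : approx sigma gamma m.+1 =
  \sum_(c : C) tr sigma gamma c * approx sigma (rcons gamma c) m.
Proof.
rewrite /approx_payoff.
have -> : \sum_(u : m.+1.-tuple C) cyl_prob d P sigma gamma u * f (complete c0 (gamma ++ u))
  = \sum_(p : C * m.-tuple C) cyl_prob d P sigma gamma [tuple of p.1 :: p.2]
      * f (complete c0 (gamma ++ (p.1 :: p.2))).
  rewrite (reindex (fun p : C * m.-tuple C => [tuple of p.1 :: p.2])) //=.
  exists (fun u : m.+1.-tuple C => (thead u, [tuple of behead u])).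
    by move=> [c t] _ /=; congr pair; apply: val_inj.
  by move=> u _; rewrite [RHS](tuple_eta u).
rewrite -(pair_big xpredT xpredT (fun c (t : m.-tuple C) =>
   cyl_prob d P sigma gamma [tuple of c :: t] * f (complete c0 (gamma ++ (c :: t))))) /=.
apply: eq_bigr => c _; rewrite big_distrr /=; apply: eq_bigr => t _.
rewrite /cyl_prob big_ord_recl /= cats0 -mulrA; congr (_ * _); rewrite -cat_rcons.
congr (_ * _); apply: eq_bigr => j _.
by rewrite /= -cat_rcons tnthS.
Qed.

Hypothesis HP : forall w, d w = None -> (forall c, 0 <= P w c) /\ \sum_(c : C) P w c = 1.

Lemma tr_ge0 sigma w c : 0 <= tr sigma w c.
Proof.
rewrite /trans; case E: (d w) => [a|]; first by case: (_ == _).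
by case: (HP E).
Qed.

Lemma tr_sum sigma w : \sum_(c : C) tr sigma w c = 1.
Proof.
rewrite /trans; case E: (d w) => [a|]; last by case: (HP E).
rewrite (bigD1 (sigma a w)) //= eqxx big1 ?addr0 // => c /negbTE.
by rewrite eq_sym => ->.
Qed.

Lemma convex_bound (t x : C -> R) (y e : R) : (forall c, 0 <= t c) ->
  \sum_c t c = 1 -> (forall c, `|x c - y| <= e) -> `|\sum_c t c * x c - y| <= e.
Proof.
move=> t0 t1 hx.
have -> : \sum_c t c * x c - y = \sum_c t c * (x c - y).
  rewrite -[X in _ - X]mul1r -t1 big_distrl /= -sumrB.
  by apply: eq_bigr => c _; rewrite mulrBr.
apply: le_trans (ler_norm_sum _ _ _) _.
apply: le_trans (_ : \sum_c t c * e <= e); last by rewrite -big_distrl /= t1 mul1r.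
apply: ler_sum => c _; rewrite normrM ger0_norm //.
by apply: ler_wpM2l.
Qed.

Lemma tr_convex sigma w (x : C -> R) y e : (forall c, `|x c - y| <= e) ->
  `|\sum_c tr sigma w c * x c - y| <= e.
Proof. by apply: convex_bound => //; [apply: tr_ge0 | apply: tr_sum]. Qed.

Definition agrees (p : nat -> C) (w : seq C) := forall i, (i < size w)%N -> p i = nth c0 w i.

Lemma approx_near sigma k gamma y e :
  (forall p, agrees p gamma -> `|f p - y| <= e) -> `|approx sigma gamma k - y| <= e.
Proof.
elim: k gamma => [|k IH] gamma H; first by rewrite approx0; apply: H.
rewrite approxS; apply: tr_convex => c; apply: IH => p Hp; apply: H => i Hi.
rewrite Hp ?size_rcons 1?ltnW // nth_rcons Hi //.
Qed.

Variable N : nat.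
Variable e : R.
Hypothesis Hunif : forall p q, (forall i, (i < N)%N -> p i = q i) -> `|f p - f q| <= e.

Lemma approx_tail sigma m : forall gamma k, (N <= size gamma + m)%N ->
  `|approx sigma gamma (m + k) - approx sigma gamma m| <= e.
Proof.
elim: m => [|m IH] gamma k Hs.
  rewrite add0n approx0; apply: approx_near => p Hp; apply: Hunif => i Hi.
  by rewrite Hp /complete //; apply: leq_trans Hi _; rewrite addn0 in Hs.
rewrite addSn !approxS -sumrB.
have -> : \sum_c (tr sigma gamma c * approx sigma (rcons gamma c) (m + k) -
     tr sigma gamma c * approx sigma (rcons gamma c) m) =
   \sum_c tr sigma gamma c * (approx sigma (rcons gamma c) (m + k) - approx sigma (rcons gamma c) m).
  by apply: eq_bigr => c _; rewrite mulrBr.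
rewrite -[X in `|X|]subr0; apply: tr_convex => c; rewrite subr0; apply: IH.
by rewrite size_rcons addSnnS.
Qed.

End Game.

Section Conv.
Variables (R : realType) (A : countType) (C : finType) (c0 : C).
Variables (d : seq C -> option A) (P : seq C -> {ffun C -> R}).
Variable (f : (nat -> C) -> R).
Hypothesis HP : forall w, d w = None -> (forall c, 0 <= P w c) /\ \sum_(c : C) P w c = 1.
Hypothesis Hu : forall e : R, 0 < e -> exists N, forall p q : nat -> C,
   (forall i, (i < N)%N -> p i = q i) -> `|f p - f q| <= e.

Notation approx := (approx_payoff d P c0 f).

Lemma approx_cvg sigma gamma : cvgn (approx sigma gamma).
Proof.
apply: cauchy_cvg; apply: cauchy_exP => eps eps0.
have [N HN] := Hu (divr_gt0 eps0 (ltr0n _ 2)).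
exists (approx sigma gamma N).
exists N => // n /= Nn.
rewrite /ball /= -(subnK Nn) addnC.
rewrite distrC; apply: le_lt_trans (approx_tail c0 HP HN sigma _ _) _.
  by apply: leq_addl.
by rewrite ltr_pdivrMr // ltr_pMr // ltr1n.
Qed.

Lemma exp_near N (e : R) sigma gamma m :
  (forall p q : nat -> C, (forall i, (i < N)%N -> p i = q i) -> `|f p - f q| <= e) ->
  (N <= size gamma + m)%N ->
  `|exp_payoff d P c0 f sigma gamma - approx sigma gamma m| <= e.
Proof.
move=> HN Hs; have cv : cvgn (approx sigma gamma) by apply: approx_cvg.
have Hb : forall n, (m <= n)%N -> `|approx sigma gamma n - approx sigma gamma m| <= e.
  move=> n mn; rewrite -(subnK mn) addnC.
exact: (approx_tail c0 HP HN sigma (n - m) Hs).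
have L1 : approx sigma gamma m - e <= limn (approx sigma gamma).
  apply: limr_ge => //; exists m => // n /= mn.
  by have := Hb n mn; rewrite ler_norml => /andP[H1 H2]; lra.
have L2 : limn (approx sigma gamma) <= approx sigma gamma m + e.
  apply: limr_le => //; exists m => // n /= mn.
  by have := Hb n mn; rewrite ler_norml => /andP[H1 H2]; lra.
rewrite /exp_payoff ler_norml; apply/andP; split; lra.
Qed.

End Conv.
Lemma sum_ind (R : realType) (C : finType) (s : C) (X : C -> R) :
  \sum_c (if s == c then 1 else 0) * X c = X s.
Proof.
rewrite (bigD1 s) //= eqxx mul1r big1 ?addr0 // => c /negbTE.
by rewrite eq_sym => ->; rewrite mul0r.
Qed.

Section BI.
Variables (R : realType) (A : countType) (C : finType) (c0 : C).
Variables (d : seq C -> option A) (P : seq C -> {ffun C -> R}).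
Hypothesis HP : forall w, d w = None -> (forall c, 0 <= P w c) /\ \sum_(c : C) P w c = 1.
Variable fa : A -> (nat -> C) -> R.

Definition bestv (V : seq C -> A -> R) w b :=
  Order.arg_max c0 xpredT (fun c => V (rcons w c) b).

Lemma bestvP V w b c : V (rcons w c) b <= V (rcons w (bestv V w b)) b.
Proof. rewrite /bestv; by case: (@arg_maxP _ _ C c0 xpredT (fun c => V (rcons w c) b)) => // i _ H; exact: H. Qed.

Fixpoint Vk (k : nat) (w : seq C) (a : A) : R :=
  match k with
  | 0 => fa a (complete c0 w)
  | k.+1 => match d w with
            | Some b => Vk k (rcons w (bestv (Vk k) w b)) a
            | None => \sum_c P w c * Vk k (rcons w c) a
            end
  end.

Definition sigL (L : nat) : profile A C := fun b w => bestv (Vk (L - size w).-1) w b.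

Lemma approx_eq L a k : forall w, (size w + k)%N = L ->
  approx_payoff d P c0 (fa a) (sigL L) w k = Vk k w a.
Proof.
elim: k => [|k IH] w Hs; first by rewrite approx0.
rewrite approxS /= /trans; case E: (d w) => [b|].
  rewrite sum_ind IH; last by rewrite size_rcons addSnnS.
  by rewrite /sigL -Hs -addnBAC // subnn add0n.
by apply: eq_bigr => c _; rewrite IH // size_rcons addSnnS.
Qed.

Lemma approx_dev L a s k : forall w, (size w + k)%N = L ->
  approx_payoff d P c0 (fa a) (upd (sigL L) a s) w k <= Vk k w a.
Proof.
elim: k => [|k IH] w Hs; first by rewrite approx0.
rewrite approxS /= /trans; case E: (d w) => [b|].
  rewrite sum_ind; apply: le_trans (IH _ _) _; first by rewrite size_rcons addSnnS.
  rewrite /upd; case: eqP => [->|_]; first exact: bestvP.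
  by rewrite /sigL -Hs -addnBAC // subnn add0n.
apply: ler_sum => c _; apply: ler_wpM2l; first by case: (HP E).
by apply: IH; rewrite size_rcons addSnnS.
Qed.

End BI.
Lemma unif (R : realType) (C : finType) (c0 : C) (f : (nat -> C) -> R) :
  cont_play f -> forall e : R, 0 < e -> exists N, forall p q : nat -> C,
   (forall i, (i < N)%N -> p i = q i) -> `|f p - f q| <= e.
Proof.
move=> Hc e e0; apply: contrapT => /forallNP H.
have H' : forall N, exists pq : (nat -> C) * (nat -> C),
    (forall i, (i < N)%N -> pq.1 i = pq.2 i) /\ e < `|f pq.1 - f pq.2|.
  move=> N; have /existsNP [p /existsNP [q /not_implyP [Hpq Hn]]] := H N.
  by exists (p, q); split => //; rewrite ltNge; apply/negP.
pose pq N := projT1 (cid (H' N)).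
have [h Hh] := @cluster nat C c0 (fun N i => (pq N).1 i).
have e20 : 0 < e / 2 by rewrite divr_gt0.
have [n Hn] := Hc h (e / 2) e20.
have [N [nN HN]] := Hh (iota 0 n) n.
have [Hag Hgt] := projT2 (cid (H' N)).
have E1 : `|f (pq N).1 - f h| < e / 2.
  by apply: Hn => i Hi; apply: HN; rewrite mem_iota.
have E2 : `|f (pq N).2 - f h| < e / 2.
  apply: Hn => i Hi; rewrite -Hag; last exact: leq_trans Hi nN.
  by apply: HN; rewrite mem_iota.
have T := ler_distD (f h) (f (pq N).1) (f (pq N).2).
rewrite (distrC (f h)) in T.
rewrite /pq in Hgt E1 E2 T; lra.
Qed.

Lemma locality (R : realType) (A : countType) (C : finType) (c0 : C)
  (d : seq C -> option A) (P : seq C -> {ffun C -> R}) (f : (nat -> C) -> R)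
  (sigma tau : profile A C) m : forall gamma,
  (forall w b, (size w < size gamma + m)%N -> d w = Some b -> sigma b w = tau b w) ->
  approx_payoff d P c0 f sigma gamma m = approx_payoff d P c0 f tau gamma m.
Proof.
elim: m => [|m IH] gamma H; first by rewrite !approx0.
rewrite !approxS; apply: eq_bigr => c _; congr (_ * _).
  rewrite /trans; case E: (d gamma) => [b|] //.
  by rewrite H // addnS ltnS leq_addr.
apply: IH => w b Hw; apply: H; by rewrite size_rcons addSnnS in Hw.
Qed.

Definition hist (C : finType) (L : nat) : seq (seq C) :=
  flatten [seq map (@tval k C) (enum {: k.-tuple C}) | k <- iota 0 L].

Lemma hist_mem (C : finType) L (w : seq C) : (size w < L)%N -> w \in hist C L.
Proof.
move=> Hw; apply/flatten_mapP; exists (size w); first by rewrite mem_iota.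
by apply/mapP; exists (in_tuple w); rewrite ?mem_enum.
Qed.

Theorem corollary12 (R : realType) (A : countType) (a0 : A) (C : finType) (c0 : C)
  (d : seq C -> option A) (P : seq C -> {ffun C -> R})
  (f : A -> (nat -> C) -> R) :
  (forall w, d w = None -> (forall c, 0 <= P w c) /\ \sum_(c : C) P w c = 1) ->
  (forall a p, 0 <= f a p <= 1) ->
  (forall a, cont_play (f a)) ->
  exists sigma : profile A C, is_SPE d P c0 f sigma.
Proof.
move=> HP _ Hc.
have Hu a := unif c0 (Hc a).
pose g L w := match d w with Some b => sigL c0 d P f L b w | None => c0 end.
have [h Hh] := @cluster (seq C) C c0 g.
exists (fun _ w => h w) => gamma a s Hlt.
set sig := (fun _ w => h w) : profile A C.
set del := exp_payoff d P c0 (f a) (upd sig a s) gamma - exp_payoff d P c0 (f a) sig gamma.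
have del0 : 0 < del by rewrite subr_gt0.
have e0 : 0 < del / 5 by rewrite divr_gt0.
have [N HN] := Hu a _ e0.
set L0 := (size gamma + N)%N.
have [L [L0L HL]] := Hh (hist C L0) L0.
have Hag : forall w b, (size w < L0)%N -> d w = Some b -> sig b w = sigL c0 d P f L b w.
  move=> w b Hw E; rewrite /sig -HL ?hist_mem // /g E //.
set k := (N + (L - L0))%N.
have Hk : (size gamma + k)%N = L by rewrite /k addnA subnKC.
have E1 := exp_near c0 HP (Hu a) (upd sig a s) HN (leq_addl (size gamma) N).
have E2 := exp_near c0 HP (Hu a) sig HN (leq_addl (size gamma) N).
have L1 : approx_payoff d P c0 (f a) (upd sig a s) gamma N =
          approx_payoff d P c0 (f a) (upd (sigL c0 d P f L) a s) gamma N.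
  apply: locality => w b Hw E; rewrite /upd; case: (b == a) => //; exact: Hag.
have L2 : approx_payoff d P c0 (f a) sig gamma N =
          approx_payoff d P c0 (f a) (sigL c0 d P f L) gamma N.
  by apply: locality => w b Hw E; exact: Hag.
have T1 := approx_tail c0 HP HN (upd (sigL c0 d P f L) a s) (L - L0) (leq_addl (size gamma) N).
have T2 := approx_tail c0 HP HN (sigL c0 d P f L) (L - L0) (leq_addl (size gamma) N).
have D := approx_dev c0 HP f a s Hk.
have Q := approx_eq c0 d P f a Hk.
rewrite -/k in T1 T2.
rewrite -Q in D.
rewrite -L1 in T1; rewrite -L2 in T2.
move: E1 E2 T1 T2 D; rewrite !ler_norml => /andP[? ?] /andP[? ?] /andP[? ?] /andP[? ?] ?.
have Edel : del = exp_payoff d P c0 (f a) (upd sig a s) gamma - exp_payoff d P c0 (f a) sig gamma by [].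
clearbody del; lra.
Qed.
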